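(* Let $n\geq1$, $p<-n-1$, $\gamma=\frac{p+n+1}{n+1}<0$, and $\psi(r)=\frac{(1+r^2)^{\frac{n+1}{2}}}{r^n}$ for $r>0$. Let $\varphi:[0,\infty)\to[0,\infty)$ be continuous, positive on $(0,\infty)$, with $\lim_{r\to\infty}\varphi(r)=\varphi_\infty\in(0,\infty)$, and decaying to zero rapidly as $r\to0$, in the sense that $M:=\int_0^1\frac{\varphi(r)}{r}\psi(r)^{-\gamma}\,dr<\infty$. Let $\beta>M$ and define $$f(r)=\psi(r)^{\gamma}\Big[\int_1^r\frac{\varphi(s)}{s}\psi(s)^{-\gamma}\,ds+\beta\Big],\qquad r\in(0,\infty).$$ Then $f$ is $C^1$ on $(0,\infty)$, $f(r)>0$ for all $r\in(0,\infty)$, $\lim_{r\to0}f(r)=0$ (so $f$ extends continuously with $f(0)=0$), and $\lim_{r\to\infty}f(r)=\frac{\varphi_\infty}{|\gamma|}$. *)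

(* Defs.v *)
From Stdlib Require Import Reals.
From Coquelicot Require Import Coquelicot.
Open Scope R_scope.

Definition gam (n : nat) (p : R) : R := (p + INR n + 1) / (INR n + 1).

Definition psi (n : nat) (r : R) : R :=
  Rpower (1 + r ^ 2) ((INR n + 1) / 2) / r ^ n.

Definition integrand (n : nat) (p : R) (phi : R -> R) (s : R) : R :=
  phi s / s * Rpower (psi n s) (- gam n p).

Definition fdef (n : nat) (p : R) (phi : R -> R) (beta : R) (r : R) : R :=
  Rpower (psi n r) (gam n p) * (RInt (integrand n p phi) 1 r + beta).

(* Main.v *)
Require Import Defs.
From Stdlib Require Import Reals Lra Psatz.
From Coquelicot Require Import Coquelicot.
Open Scope R_scope.

Definition Lf (n : nat) (s : R) : R := (INR n + 1) / 2 * ln (1 + s ^ 2) - INR n * ln s.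
Definition dL (n : nat) (s : R) : R := (INR n + 1) / 2 * (2 * s / (1 + s ^ 2)) - INR n / s.

Lemma psi_pos n s : 0 < s -> 0 < psi n s.
Proof.
  intros Hs; unfold psi, Rpower, Rdiv.
  apply Rmult_lt_0_compat; [apply exp_pos|apply Rinv_0_lt_compat, pow_lt; lra].
Qed.

Lemma ln_psi n s : 0 < s -> ln (psi n s) = Lf n s.
Proof.
  intros Hs; unfold psi, Lf.
  rewrite ln_div; [| unfold Rpower; apply exp_pos | apply pow_lt; lra].
  rewrite ln_pow by lra. unfold Rpower. rewrite ln_exp. reflexivity.
Qed.

Lemma Rpower_psi n s y : 0 < s -> Rpower (psi n s) y = exp (y * Lf n s).
Proof. intros Hs; unfold Rpower; rewrite ln_psi; auto. Qed.

Lemma locally_pos r : 0 < r -> locally r (fun x => 0 < x).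
Proof.
  intros Hr. exists (mkposreal r Hr). intros y Hy.
  unfold ball in Hy; simpl in Hy; unfold AbsRing_ball, abs, minus, plus, opp in Hy; simpl in Hy.
  apply Rabs_def2 in Hy. lra.
Qed.

Lemma is_derive_Lf n s : 0 < s -> is_derive (Lf n) s (dL n s).
Proof.
  intros Hs. unfold Lf, dL. auto_derive.
  - split; [nra|split; [lra|exact I]].
  - field. split; nra.
Qed.

Lemma ex_derive_dL n s : 0 < s -> ex_derive (dL n) s.
Proof. intros Hs. unfold dL. auto_derive. split; [nra| split; [lra|exact I]]. Qed.

Lemma is_derive_expL n c s : 0 < s ->
  is_derive (fun x => exp (c * Lf n x)) s (c * dL n s * exp (c * Lf n s)).
Proof.
  intros Hs. unfold Lf, dL. auto_derive.
  - split; [nra|split; [lra|exact I]].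
  - replace (1 + s * (s * 1)) with (1 + s ^ 2) by ring. unfold Rminus. field. split; nra.
Qed.

Lemma integrand_eq n p phi s : 0 < s ->
  integrand n p phi s = phi s * (/ s * exp (- gam n p * Lf n s)).
Proof. intros Hs; unfold integrand; rewrite Rpower_psi by auto. unfold Rdiv; ring. Qed.

Lemma integrand_cont n p phi s : 0 < s -> continuous phi s -> continuous (integrand n p phi) s.
Proof.
  intros Hs Hc.
  apply continuous_ext_loc with (fun x => mult (phi x) (/ x * exp (- gam n p * Lf n x))).
  - generalize (locally_pos s Hs). apply filter_imp. intros x Hx. rewrite integrand_eq; auto.
  - apply (continuous_mult (K:=R_AbsRing)); auto. apply (ex_derive_continuous (K:=R_AbsRing) (V:=R_NormedModule)). unfold Lf. auto_derive.
    repeat split; try nra; try lra.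
Qed.

Lemma ex_RInt_g n p phi a b : (forall r, 0 < r -> continuous phi r) -> 0 < a -> 0 < b ->
  ex_RInt (integrand n p phi) a b.
Proof.
  intros Hc Ha Hb. apply (ex_RInt_continuous (V:=R_CompleteNormedModule)). intros z Hz.
  apply integrand_cont; [|apply Hc]; destruct Hz as [Hz _];
  apply Rlt_le_trans with (Rmin a b); auto; apply Rmin_glb_lt; auto.
Qed.

Lemma is_derive_F n p phi r : (forall r, 0 < r -> continuous phi r) -> 0 < r ->
  is_derive (fun x => RInt (integrand n p phi) 1 x) r (integrand n p phi r).
Proof.
  intros Hc Hr. apply (is_derive_RInt (V:=R_CompleteNormedModule) _ _ 1).
  - generalize (locally_pos r Hr). apply filter_imp. intros x Hx.
    apply (RInt_correct (V:=R_CompleteNormedModule)). apply ex_RInt_g; auto; lra.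
  - apply integrand_cont; auto.
Qed.

Lemma fdef_eq n p phi beta r : 0 < r ->
  fdef n p phi beta r = exp (gam n p * Lf n r) * (RInt (integrand n p phi) 1 r + beta).
Proof. intros Hr; unfold fdef; rewrite Rpower_psi; auto. Qed.

Definition Df n p phi beta r :=
  gam n p * dL n r * exp (gam n p * Lf n r) * (RInt (integrand n p phi) 1 r + beta)
  + exp (gam n p * Lf n r) * integrand n p phi r.

Lemma is_derive_fdef n p phi beta r : (forall r, 0 < r -> continuous phi r) -> 0 < r ->
  is_derive (fdef n p phi beta) r (Df n p phi beta r).
Proof.
  intros Hc Hr.
  apply is_derive_ext_loc with (fun x => mult (exp (gam n p * Lf n x)) (RInt (integrand n p phi) 1 x + beta)).
  { generalize (locally_pos r Hr). apply filter_imp. intros x Hx. rewrite fdef_eq; auto. }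
  pose proof (is_derive_expL n (gam n p) r Hr) as E.
  assert (F' : is_derive (fun x => RInt (integrand n p phi) 1 x + beta) r (integrand n p phi r)).
  { replace (integrand n p phi r) with (plus (integrand n p phi r) zero)
      by (rewrite plus_zero_r; auto).
    apply (is_derive_plus (K:=R_AbsRing) (V:=R_NormedModule) (fun x => RInt (integrand n p phi) 1 x) (fun _ => beta)).
    - apply is_derive_F; auto.
    - apply (is_derive_const (K:=R_AbsRing) (V:=R_NormedModule)). }
  pose proof (is_derive_mult _ _ r _ _ E F' (fun a b => Rmult_comm a b)) as D.
  unfold Df. exact D.
Qed.

Lemma cont_mult (f g : R -> R) x : continuous f x -> continuous g x -> continuous (fun y => f y * g y) x.
Proof. intros; apply (continuous_mult (K:=R_AbsRing)); auto. Qed.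
Lemma cont_plus (f g : R -> R) x : continuous f x -> continuous g x -> continuous (fun y => f y + g y) x.
Proof. intros; apply (continuous_plus (K:=R_AbsRing) (V:=R_NormedModule) f g); auto. Qed.
Lemma cont_der (f : R -> R) x : ex_derive f x -> continuous f x.
Proof. intros; apply (ex_derive_continuous (K:=R_AbsRing) (V:=R_NormedModule)); auto. Qed.

Lemma is_derive_Fb n p phi beta r : (forall r, 0 < r -> continuous phi r) -> 0 < r ->
  is_derive (fun x => RInt (integrand n p phi) 1 x + beta) r (integrand n p phi r).
Proof.
  intros Hc Hr.
  replace (integrand n p phi r) with (plus (integrand n p phi r) zero)
      by (rewrite plus_zero_r; auto).
  apply (is_derive_plus (K:=R_AbsRing) (V:=R_NormedModule) (fun x => RInt (integrand n p phi) 1 x) (fun _ => beta)).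
  - apply is_derive_F; auto.
  - apply (is_derive_const (K:=R_AbsRing) (V:=R_NormedModule)).
Qed.

Lemma cont_Derive n p phi beta r : (forall r, 0 < r -> continuous phi r) -> 0 < r ->
  continuous (Derive (fdef n p phi beta)) r.
Proof.
  intros Hc Hr.
  apply continuous_ext_loc with (Df n p phi beta).
  { generalize (locally_pos r Hr). apply filter_imp. intros x Hx.
    symmetry. apply is_derive_unique. apply is_derive_fdef; auto. }
  unfold Df. apply cont_plus; apply cont_mult.
  - apply cont_mult; [apply cont_mult|].
    + apply continuous_const.
    + apply cont_der, ex_derive_dL; auto.
    + apply cont_der. eexists. apply is_derive_expL; auto.
  - apply cont_der. eexists. apply is_derive_Fb; auto.
  - apply cont_der. eexists. apply is_derive_expL; auto.
  - apply integrand_cont; auto.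
Qed.

Lemma HM_lim n p phi M : (forall r, 0 < r -> continuous phi r) ->
  is_RInt_gen (integrand n p phi) (at_right 0) (at_point 1) M ->
  forall eps, 0 < eps -> exists d, 0 < d /\
    forall x, 0 < x < d -> Rabs (RInt (integrand n p phi) x 1 - M) < eps.
Proof.
  intros Hc HM eps He.
  specialize (HM (ball M (mkposreal eps He)) (locally_ball M (mkposreal eps He))).
  destruct HM as [Q R HQ HR HP].
  destruct HQ as [d Hd]. exists d. split; [apply cond_pos|].
  intros x Hx.
  assert (Qx : Q x).
  { apply Hd; [|lra]. unfold ball; simpl; unfold AbsRing_ball, abs, minus, plus, opp; simpl.
    rewrite Ropp_0, Rplus_0_r, Rabs_pos_eq by lra. lra. }
  destruct (HP x 1 Qx HR) as [y [Hy Hb]]. simpl in Hy.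
  rewrite (is_RInt_unique _ _ _ _ Hy).
  unfold ball in Hb; simpl in Hb; unfold AbsRing_ball, abs, minus, plus, opp in Hb; simpl in Hb.
  exact Hb.
Qed.

Lemma g_pos n p phi s : (forall r, 0 < r -> 0 < phi r) -> 0 < s -> 0 < integrand n p phi s.
Proof.
  intros Hp Hs. rewrite integrand_eq by auto.
  apply Rmult_lt_0_compat; auto. apply Rmult_lt_0_compat; [apply Rinv_0_lt_compat; auto|apply exp_pos].
Qed.

Lemma RInt_g_nonneg n p phi a b : (forall r, 0 < r -> continuous phi r) ->
  (forall r, 0 < r -> 0 < phi r) -> 0 < a -> a <= b -> 0 <= RInt (integrand n p phi) a b.
Proof.
  intros Hc Hp Ha Hab. apply RInt_ge_0; auto.
  - apply ex_RInt_g; auto; lra.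
  - intros x Hx. apply Rlt_le, g_pos; auto; lra.
Qed.

Lemma RInt_le_M n p phi M r : (forall r, 0 < r -> continuous phi r) ->
  (forall r, 0 < r -> 0 < phi r) ->
  is_RInt_gen (integrand n p phi) (at_right 0) (at_point 1) M ->
  0 < r -> r <= 1 -> RInt (integrand n p phi) r 1 <= M.
Proof.
  intros Hc Hp HM Hr Hr1.
  destruct (Rle_or_lt (RInt (integrand n p phi) r 1) M) as [H|H]; auto. exfalso.
  destruct (HM_lim n p phi M Hc HM (RInt (integrand n p phi) r 1 - M)) as [d [Hd Hx]]; [lra|].
  set (x := Rmin (d/2) (r/2)).
  assert (Hx0 : 0 < x) by (unfold x; apply Rmin_glb_lt; lra).
  assert (Hxd : x < d) by (unfold x; eapply Rle_lt_trans; [apply Rmin_l|lra]).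
  assert (Hxr : x < r) by (unfold x; eapply Rle_lt_trans; [apply Rmin_r|lra]).
  specialize (Hx x (conj Hx0 Hxd)).
  assert (E : RInt (integrand n p phi) x 1 = RInt (integrand n p phi) x r + RInt (integrand n p phi) r 1).
  { symmetry. apply (RInt_Chasles (V:=R_CompleteNormedModule)); apply ex_RInt_g; auto; lra. }
  assert (0 <= RInt (integrand n p phi) x r) by (apply RInt_g_nonneg; auto; lra).
  rewrite E in Hx. apply Rabs_def2 in Hx. lra.
Qed.

Lemma M_nonneg n p phi M : (forall r, 0 < r -> continuous phi r) ->
  (forall r, 0 < r -> 0 < phi r) ->
  is_RInt_gen (integrand n p phi) (at_right 0) (at_point 1) M -> 0 <= M.
Proof.
  intros Hc Hp HM. apply Rle_trans with (RInt (integrand n p phi) (1/2) 1).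
  - apply RInt_g_nonneg; auto; lra.
  - apply RInt_le_M; auto; lra.
Qed.

Lemma exp_le' x y : x <= y -> exp x <= exp y.
Proof. intros [H|H]; [apply Rlt_le, exp_increasing; auto| subst; lra]. Qed.

Lemma gam_neg n p : p < - INR n - 1 -> gam n p < 0.
Proof.
  intros Hp. unfold gam. pose proof (pos_INR n).
  unfold Rdiv. apply Rmult_neg_pos; [lra|]. apply Rinv_0_lt_compat; lra.
Qed.

Lemma Fb_pos n p phi M beta r : (forall r, 0 < r -> continuous phi r) ->
  (forall r, 0 < r -> 0 < phi r) ->
  is_RInt_gen (integrand n p phi) (at_right 0) (at_point 1) M -> M < beta ->
  0 < r -> 0 < RInt (integrand n p phi) 1 r + beta.
Proof.
  intros Hc Hp HM Hb Hr. pose proof (M_nonneg n p phi M Hc Hp HM).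
  destruct (Rle_or_lt 1 r).
  - pose proof (RInt_g_nonneg n p phi 1 r Hc Hp ltac:(lra) H0). lra.
  - rewrite <- (opp_RInt_swap (V:=R_CompleteNormedModule)) by (apply ex_RInt_g; auto; lra).
    pose proof (RInt_le_M n p phi M r Hc Hp HM Hr ltac:(lra)).
    change (opp (RInt (integrand n p phi) r 1)) with (- RInt (integrand n p phi) r 1). lra.
Qed.

Lemma Fb_le n p phi beta r : (forall r, 0 < r -> continuous phi r) ->
  (forall r, 0 < r -> 0 < phi r) -> 0 < r -> r <= 1 ->
  RInt (integrand n p phi) 1 r + beta <= beta.
Proof.
  intros Hc Hp Hr Hr1.
  rewrite <- (opp_RInt_swap (V:=R_CompleteNormedModule)) by (apply ex_RInt_g; auto; lra).
  pose proof (RInt_g_nonneg n p phi r 1 Hc Hp Hr Hr1).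
  change (opp (RInt (integrand n p phi) r 1)) with (- RInt (integrand n p phi) r 1). lra.
Qed.

Lemma lim0 n p phi M beta : (1 <= n)%nat -> p < - INR n - 1 ->
  (forall r, 0 < r -> continuous phi r) ->
  (forall r, 0 < r -> 0 < phi r) ->
  is_RInt_gen (integrand n p phi) (at_right 0) (at_point 1) M -> M < beta ->
  filterlim (fdef n p phi beta) (at_right 0) (locally 0).
Proof.
  intros Hn Hp Hc Hph HM Hb.
  pose proof (M_nonneg n p phi M Hc Hph HM) as HM0.
  pose proof (gam_neg n p Hp) as Hg.
  assert (Hn1 : 1 <= INR n) by (change 1 with (INR 1); apply le_INR; auto).
  apply filterlim_locally. intros eps.
  set (a := - gam n p).
  set (d := Rmin 1 (exp (ln (eps / beta) / a))).
  assert (Hd : 0 < d) by (unfold d; apply Rmin_glb_lt; [lra|apply exp_pos]).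
  exists (mkposreal d Hd). intros y Hy Hy0.
  unfold ball in Hy; simpl in Hy; unfold AbsRing_ball, abs, minus, plus, opp in Hy; simpl in Hy.
  rewrite Ropp_0, Rplus_0_r, Rabs_pos_eq in Hy by lra.
  assert (Hy1 : y < 1) by (eapply Rlt_le_trans; [exact Hy|apply Rmin_l]).
  assert (Hy2 : y < exp (ln (eps / beta) / a)) by (eapply Rlt_le_trans; [exact Hy|apply Rmin_r]).
  unfold ball; simpl; unfold AbsRing_ball, abs, minus, plus, opp; simpl.
  rewrite Ropp_0, Rplus_0_r.
  pose proof (Fb_pos n p phi M beta y Hc Hph HM Hb Hy0) as P1.
  pose proof (Fb_le n p phi beta y Hc Hph Hy0 (Rlt_le _ _ Hy1)) as P2.
  rewrite fdef_eq by auto.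
  pose proof (exp_pos (gam n p * Lf n y)) as Ep.
  rewrite Rabs_pos_eq by (apply Rmult_le_pos; lra).
  assert (Hly : ln y < 0) by (rewrite <- ln_1; apply ln_increasing; lra).
  assert (HX : 0 <= ln (1 + y ^ 2)) by (rewrite <- ln_1; apply ln_le; nra).
  assert (HL : gam n p * Lf n y <= a * ln y).
  { unfold Lf, a.
    assert (0 <= - gam n p * ((INR n + 1) / 2 * ln (1 + y ^ 2))) by (apply Rmult_le_pos; [lra|apply Rmult_le_pos; lra]).
    assert (0 <= - gam n p * (- ln y * (INR n - 1))) by (apply Rmult_le_pos; [lra|apply Rmult_le_pos; lra]).
    nra. }
  assert (Ha : 0 < a) by (unfold a; lra).
  assert (Hbe : 0 < beta) by lra.
  assert (Hln : a * ln y < ln (eps / beta)).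
  { apply ln_increasing in Hy2; auto. rewrite ln_exp in Hy2.
    apply (Rmult_lt_compat_l a) in Hy2; auto. field_simplify in Hy2; lra. }
  apply exp_increasing in Hln. rewrite exp_ln in Hln by (apply Rdiv_lt_0_compat; [apply cond_pos|lra]).
  apply exp_le' in HL.
  apply Rle_lt_trans with (exp (gam n p * Lf n y) * beta).
  - apply Rmult_le_compat_l; lra.
  - apply Rle_lt_trans with (exp (a * ln y) * beta).
    + apply Rmult_le_compat_r; lra.
    + apply (Rmult_lt_compat_r beta) in Hln; auto. field_simplify in Hln; lra.
Qed.

Lemma k_lim n : is_lim (fun y => (1 + y ^ 2) / (y ^ 2 - INR n)) p_infty 1.
Proof.
  apply is_lim_spec. intros eps. pose proof (cond_pos eps) as He. pose proof (pos_INR n).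
  exists (INR n + (INR n + 1) / eps + 1). intros y Hy.
  assert (Hq : 0 <= (INR n + 1) / eps) by (apply Rlt_le, Rdiv_lt_0_compat; lra).
  assert (Hy2 : y ^ 2 - INR n > (INR n + 1) / eps) by nra.
  replace ((1 + y ^ 2) / (y ^ 2 - INR n) - 1) with ((INR n + 1) / (y ^ 2 - INR n)) by (field; lra).
  rewrite Rabs_pos_eq by (apply Rlt_le, Rdiv_lt_0_compat; lra).
  apply Rlt_div_l; [lra|].
  apply Rmult_lt_compat_l with (r := eps) in Hy2; auto.
  replace (eps * ((INR n + 1) / eps)) with (INR n + 1) in Hy2 by (field; lra). lra.
Qed.

Lemma u_lim n phi (phiinf : R) : is_lim phi p_infty phiinf ->
  forall e, 0 < e -> exists M1, forall y, M1 < y ->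
    Rabs (phi y * ((1 + y ^ 2) / (y ^ 2 - INR n)) - phiinf) < e.
Proof.
  intros Hl e He.
  pose proof (is_lim_mult _ _ p_infty phiinf 1 Hl (k_lim n) ltac:(simpl; exact I)) as P.
  apply is_lim_spec in P. destruct (P (mkposreal e He)) as [M1 HM1].
  exists M1. intros y Hy. specialize (HM1 y Hy). simpl in HM1. replace (phiinf * 1) with phiinf in HM1 by ring. replace (y * (y * 1)) with (y ^ 2) in HM1 by ring. exact HM1.
Qed.

Lemma is_derive_D n p phi c x : (forall r, 0 < r -> continuous phi r) -> 0 < x ->
  is_derive (fun y => RInt (integrand n p phi) 1 y - c * exp (- gam n p * Lf n y)) x
    (integrand n p phi x - c * (- gam n p * dL n x * exp (- gam n p * Lf n x))).
Proof.
  intros Hc Hx.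
  apply (is_derive_minus (K:=R_AbsRing) (V:=R_NormedModule) (fun y => RInt (integrand n p phi) 1 y)
    (fun y => c * exp (- gam n p * Lf n y))).
  - apply is_derive_F; auto.
  - apply is_derive_scal. apply is_derive_expL; auto.
Qed.

Lemma mono_up (D dD : R -> R) R0 : 0 < R0 -> (forall x, R0 <= x -> is_derive D x (dD x)) ->
  (forall x, R0 <= x -> 0 <= dD x) -> forall r, R0 <= r -> D R0 <= D r.
Proof.
  intros H0 HD Hd r Hr.
  destruct (MVT_gen D R0 r dD) as [xi [Hxi E]].
  - intros x Hx. rewrite Rmin_left in Hx by lra. apply HD. lra.
  - intros x Hx. rewrite Rmin_left in Hx by lra. apply continuity_pt_filterlim.
    apply cont_der. eexists. apply HD. lra.
  - rewrite Rmin_left, Rmax_right in Hxi by lra. specialize (Hd xi ltac:(lra)). nra.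
Qed.

Lemma mono_down (D dD : R -> R) R0 : 0 < R0 -> (forall x, R0 <= x -> is_derive D x (dD x)) ->
  (forall x, R0 <= x -> dD x <= 0) -> forall r, R0 <= r -> D r <= D R0.
Proof.
  intros H0 HD Hd r Hr.
  destruct (MVT_gen D R0 r dD) as [xi [Hxi E]].
  - intros x Hx. rewrite Rmin_left in Hx by lra. apply HD. lra.
  - intros x Hx. rewrite Rmin_left in Hx by lra. apply continuity_pt_filterlim.
    apply cont_der. eexists. apply HD. lra.
  - rewrite Rmin_left, Rmax_right in Hxi by lra. specialize (Hd xi ltac:(lra)). nra.
Qed.

Lemma dD_eq n p phi c x : 0 < x -> INR n < x ^ 2 ->
  integrand n p phi x - c * (- gam n p * dL n x * exp (- gam n p * Lf n x)) =
  (exp (- gam n p * Lf n x) * (x ^ 2 - INR n) / (x * (1 + x ^ 2))) *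
  (phi x * ((1 + x ^ 2) / (x ^ 2 - INR n)) - c * - gam n p).
Proof.
  intros Hx Hn. rewrite integrand_eq by auto. unfold dL. field. repeat split; nra.
Qed.

Lemma Lf_ge_ln n r : 1 <= r -> ln r <= Lf n r.
Proof.
  intros Hr. unfold Lf. pose proof (pos_INR n).
  assert (ln (r ^ 2) <= ln (1 + r ^ 2)) by (apply ln_le; nra).
  rewrite ln_pow in H0 by lra. simpl INR in H0.
  assert (0 <= ln r) by (rewrite <- ln_1; apply ln_le; lra).
  nra.
Qed.

Lemma lim_inf n p (phi : R -> R) (phiinf : R) beta : p < - INR n - 1 ->
  (forall r, 0 < r -> continuous phi r) ->
  is_lim phi p_infty phiinf ->
  is_lim (fdef n p phi beta) p_infty (phiinf / Rabs (gam n p)).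
Proof.
  intros Hp Hc Hl.
  pose proof (gam_neg n p Hp) as Hg.
  rewrite Rabs_left by auto.
  set (a := - gam n p). assert (Ha : 0 < a) by (unfold a; lra).
  set (l := phiinf / a).
  set (F := fun y => RInt (integrand n p phi) 1 y).
  set (H := fun y => exp (a * Lf n y)).
  pose proof (pos_INR n) as Hn0.
  apply is_lim_spec. intros eps. pose proof (cond_pos eps) as He.
  set (e := eps / 2). assert (He' : 0 < e) by (unfold e; lra).
  destruct (u_lim n phi phiinf Hl (a * e) ltac:(apply Rmult_lt_0_compat; lra)) as [M1 HM1].
  set (R0 := Rmax (M1 + 1) (INR n + 1)).
  assert (HR0a : M1 + 1 <= R0) by apply Rmax_l.
  assert (HR0b : INR n + 1 <= R0) by apply Rmax_r.
  assert (HR0 : 0 < R0) by lra.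
  assert (Hder : forall c x, R0 <= x -> is_derive (fun y => F y - c * H y) x
      ((exp (a * Lf n x) * (x ^ 2 - INR n) / (x * (1 + x ^ 2))) *
       (phi x * ((1 + x ^ 2) / (x ^ 2 - INR n)) - c * a))).
  { intros c x Hx. unfold F, H, a. rewrite <- dD_eq; [|lra|nra].
    apply is_derive_D; auto; lra. }
  assert (Hfac : forall x, R0 <= x -> 0 < exp (a * Lf n x) * (x ^ 2 - INR n) / (x * (1 + x ^ 2))).
  { intros x Hx. apply Rdiv_lt_0_compat; [apply Rmult_lt_0_compat; [apply exp_pos|nra]|].
    apply Rmult_lt_0_compat; nra. }
  assert (Hlow : forall r, R0 <= r -> F R0 - (l - e) * H R0 <= F r - (l - e) * H r).
  { apply (mono_up _ _ R0 HR0 (Hder (l - e))). intros x Hx.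
    apply Rmult_le_pos; [apply Rlt_le, Hfac; auto|].
    specialize (HM1 x ltac:(lra)). apply Rabs_def2 in HM1.
    unfold l. replace ((phiinf / a - e) * a) with (phiinf - a * e) by (field; lra). lra. }
  assert (Hup : forall r, R0 <= r -> F r - (l + e) * H r <= F R0 - (l + e) * H R0).
  { apply (mono_down _ _ R0 HR0 (Hder (l + e))). intros x Hx.
    rewrite <- (Rmult_0_r (exp (a * Lf n x) * (x ^ 2 - INR n) / (x * (1 + x ^ 2)))).
    apply Rmult_le_compat_l; [apply Rlt_le, Hfac; auto|].
    specialize (HM1 x ltac:(lra)). apply Rabs_def2 in HM1.
    unfold l. replace ((phiinf / a + e) * a) with (phiinf + a * e) by (field; lra). lra. }
  set (A1 := F R0 - (l - e) * H R0 + beta).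
  set (A2 := F R0 - (l + e) * H R0 + beta).
  set (C := Rabs A1 + Rabs A2 + 1).
  assert (HC : 0 < C) by (unfold C; pose proof (Rabs_pos A1); pose proof (Rabs_pos A2); lra).
  exists (Rmax R0 (exp (ln (C / e) / a))). intros r Hr.
  assert (Hr0 : R0 < r) by (eapply Rle_lt_trans; [apply Rmax_l|exact Hr]).
  assert (Hr1 : exp (ln (C / e) / a) < r) by (eapply Rle_lt_trans; [apply Rmax_r|exact Hr]).
  assert (HHr : C / e < H r).
  { unfold H. apply Rlt_le_trans with (exp (a * ln r)).
    - rewrite <- (exp_ln (C / e)) by (apply Rdiv_lt_0_compat; lra).
      apply exp_increasing. apply ln_increasing in Hr1; [|apply exp_pos].
      rewrite ln_exp in Hr1. apply (Rmult_lt_compat_l a) in Hr1; auto.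
      field_simplify in Hr1; lra.
    - apply exp_le'. apply Rmult_le_compat_l; [lra|]. apply Lf_ge_ln. lra. }
  assert (HHp : 0 < H r) by apply exp_pos.
  specialize (Hlow r ltac:(lra)). specialize (Hup r ltac:(lra)).
  rewrite fdef_eq by lra. fold (F r).
  replace (gam n p * Lf n r) with (- (a * Lf n r)) by (unfold a; ring).
  rewrite exp_Ropp. fold (H r).
  set (X := F r + beta).
  assert (HY : Rabs (X - l * H r) < eps * H r).
  { assert (C < e * H r).
    { apply (Rmult_lt_compat_l e) in HHr; auto. replace (e * (C / e)) with C in HHr by (field; lra). lra. }
    pose proof (Rabs_pos A1) as Q1. pose proof (Rabs_pos A2) as Q2.
    pose proof (Rle_abs A2) as Q3. pose proof (Rle_abs (- A1)) as Q4. rewrite Rabs_Ropp in Q4.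
    assert (eps * H r = 2 * (e * H r)) by (unfold e; field). unfold X. apply Rabs_def1; unfold C, A1, A2 in *; lra. }
  replace (/ H r * X - l) with ((X - l * H r) / H r) by (field; lra).
  rewrite Rabs_div by lra. rewrite (Rabs_pos_eq (H r)) by lra.
  apply Rlt_div_l; lra.
Qed.

Theorem lemma4p1 (n : nat) (p : R) (phi : R -> R) (phiinf M beta : R)
  (Hn : (1 <= n)%nat)
  (Hp : p < - INR n - 1)
  (Hphi_nonneg : forall r, 0 <= r -> 0 <= phi r)
  (Hphi_pos : forall r, 0 < r -> 0 < phi r)
  (Hphi_cont : forall r, 0 < r -> continuous phi r)
  (Hphi_cont0 : filterlim phi (at_right 0) (locally (phi 0)))
  (Hphiinf : 0 < phiinf)
  (Hphi_lim : is_lim phi p_infty phiinf)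
  (HM : is_RInt_gen (integrand n p phi) (at_right 0) (at_point 1) M)
  (Hbeta : M < beta) :
  (forall r, 0 < r -> ex_derive (fdef n p phi beta) r) /\
  (forall r, 0 < r -> continuous (Derive (fdef n p phi beta)) r) /\
  (forall r, 0 < r -> 0 < fdef n p phi beta r) /\
  filterlim (fdef n p phi beta) (at_right 0) (locally 0) /\
  is_lim (fdef n p phi beta) p_infty (phiinf / Rabs (gam n p)).
Proof.
  split; [|split; [|split; [|split]]].
  - intros r Hr. eexists. apply is_derive_fdef; auto.
  - intros r Hr. apply cont_Derive; auto.
  - intros r Hr. rewrite fdef_eq by auto. apply Rmult_lt_0_compat; [apply exp_pos|].
    eapply Fb_pos; eauto.
  - eapply lim0; eauto.
  - apply lim_inf; auto.
Qed.
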